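(* Let $({\bf x}_i,y_i)$, $i=1,\dots,n$, with $y_i\in\{\pm1\}$, and let $\lambda_1>0$, $\lambda_2\ge0$, $\lambda_3>0$, $\delta>0$. Let $f(b,{\bf w})=\frac1n\sum_i\phi_H(y_i(b+{\bf x}_i^\top{\bf w}))$, $L_f=\frac{1}{n\delta}\sum_i y_i^2(1+\|{\bf x}_i\|^2)$, and let ${\bf u}^*=(b^*,{\bf w}^* )$ be the unique minimizer of $F(b,{\bf w})=f(b,{\bf w})+\lambda_1\|{\bf w}\|_1+\frac{\lambda_2}{2}\|{\bf w}\|^2+\frac{\lambda_3}{2}b^2$. Starting from any ${\bf u}^0=(b^0,{\bf w}^0)$, let $$b^k=\frac{L_f b^{k-1}-\nabla_b f({\bf u}^{k-1})}{L_f+\lambda_3},\qquad {\bf w}^k=\frac{1}{L_f+\lambda_2}\mathcal{S}_{\lambda_1}\big(L_f{\bf w}^{k-1}-\nabla_{\bf w}f({\bf u}^{k-1})\big),\quad k\ge1.$$ Let $Q(b,{\bf w})=f(b,{\bf w})+\frac{\lambda_2}{2}\|{\bf w}\|^2+\frac{\lambda_3}{2}b^2$, $h_i({\bf u})=w_i-\frac{1}{L_f+\lambda_2}\nabla_{w_i}Q({\bf u})$ for ${\bf u}=(b,{\bf w})$, and $$\mathcal{I}=\{i:|\nabla_{w_i}Q({\bf u}^* )|<\lambda_1\},\qquad \mathcal{E}=\{i:|\nabla_{w_i}Q({\bf u}^* )|=\lambda_1\}.$$ Then $\mathrm{supp}({\bf w}^* )\subset\mathcal{E}$ and $w_i^*=0$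 for all $i\in\mathcal{I}$. Moreover, for all but finitely many $k$, $w_i^k=0$ for all $i\in\mathcal{I}$ and $\mathrm{sign}(h_i({\bf u}^k))=\mathrm{sign}(h_i({\bf u}^* ))$ for all $i\in\mathcal{E}$.
   Context: $\phi_H$ is the huberized hinge loss: $\phi_H(t)=0$ for $t>1$, $\frac{(1-t)^2}{2\delta}$ for $1-\delta<t\le1$, $1-t-\frac\delta2$ for $t\le1-\delta$. $\mathcal{S}_\nu(t)=\mathrm{sign}(t)\max(|t|-\nu,0)$ componentwise. $w_i$ denotes the $i$-th component of ${\bf w}$ and $\mathrm{supp}({\bf w})=\{i:w_i\neq0\}$. The iteration above is the proximal gradient method with constant step parameter $L_f$ and no extrapolation. *)

(* Defs.v *)
From Stdlib Require Import Reals Lra List.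
Open Scope R_scope.

Definition sumR (m : nat) (g : nat -> R) : R :=
  fold_right Rplus 0 (map g (seq 0 m)).

Definition phiH (delta t : R) : R :=
  if Rlt_dec 1 t then 0
  else if Rlt_dec (1 - delta) t then (1 - t) ^ 2 / (2 * delta)
  else 1 - t - delta / 2.

Definition dphiH (delta t : R) : R :=
  if Rlt_dec 1 t then 0
  else if Rlt_dec (1 - delta) t then - (1 - t) / delta
  else -1.

(* Data: n samples, p features; x i j = j-th coordinate of x_i (i<n, j<p). *)
Definition margin (p : nat) (x : nat -> nat -> R) (y : nat -> R)
  (i : nat) (b : R) (w : nat -> R) : R :=
  y i * (b + sumR p (fun j => x i j * w j)).

Definition fobj (n p : nat) (x : nat -> nat -> R) (y : nat -> R) (delta : R)
  (b : R) (w : nat -> R) : R :=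
  / INR n * sumR n (fun i => phiH delta (margin p x y i b w)).

Definition grad_b (n p : nat) (x : nat -> nat -> R) (y : nat -> R) (delta : R)
  (b : R) (w : nat -> R) : R :=
  / INR n * sumR n (fun i => y i * dphiH delta (margin p x y i b w)).

Definition grad_w (n p : nat) (x : nat -> nat -> R) (y : nat -> R) (delta : R)
  (b : R) (w : nat -> R) (j : nat) : R :=
  / INR n * sumR n (fun i => y i * x i j * dphiH delta (margin p x y i b w)).

Definition norm1 (p : nat) (w : nat -> R) : R := sumR p (fun j => Rabs (w j)).
Definition sqnorm (p : nat) (w : nat -> R) : R := sumR p (fun j => w j ^ 2).

Definition Fobj (n p : nat) (x : nat -> nat -> R) (y : nat -> R)
  (delta l1 l2 l3 : R) (b : R) (w : nat -> R) : R :=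
  fobj n p x y delta b w + l1 * norm1 p w + l2 / 2 * sqnorm p w + l3 / 2 * b ^ 2.

Definition Lf (n p : nat) (x : nat -> nat -> R) (y : nat -> R) (delta : R) : R :=
  / (INR n * delta) * sumR n (fun i => y i ^ 2 * (1 + sqnorm p (x i))).

Definition sign (t : R) : R :=
  if Rlt_dec 0 t then 1 else if Rlt_dec t 0 then -1 else 0.
Definition shrink (nu t : R) : R := sign t * Rmax (Rabs t - nu) 0.

Definition gradQ_w (n p : nat) (x : nat -> nat -> R) (y : nat -> R)
  (delta l2 : R) (b : R) (w : nat -> R) (j : nat) : R :=
  grad_w n p x y delta b w j + l2 * w j.

Definition hfun (n p : nat) (x : nat -> nat -> R) (y : nat -> R)
  (delta l2 : R) (b : R) (w : nat -> R) (j : nat) : R :=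
  w j - / (Lf n p x y delta + l2) * gradQ_w n p x y delta l2 b w j.

(* Main.v *)
Require Import Defs.
From Stdlib Require Import Reals Lra List.
From Stdlib Require Import Lia Psatz ClassicalEpsilon.
Open Scope R_scope.


Lemma fold_Rplus_acc (l : list R) (a : R) :
  fold_right Rplus a l = fold_right Rplus 0 l + a.
Proof. induction l as [|h t IH]; simpl; [lra| rewrite IH; lra]. Qed.

Lemma sumR_0 g : sumR 0 g = 0.
Proof. reflexivity. Qed.

Lemma sumR_S m g : sumR (S m) g = sumR m g + g m.
Proof.
  unfold sumR. rewrite seq_S, map_app, fold_right_app. simpl.
  rewrite fold_Rplus_acc. lra.
Qed.

Lemma sumR_ext m g h : (forall j, (j < m)%nat -> g j = h j) -> sumR m g = sumR m h.
Proof.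
  induction m; intros H; [reflexivity|]. rewrite !sumR_S, IHm by (intros; apply H; lia).
  rewrite H by lia. reflexivity.
Qed.

Lemma sumR_plus m g h : sumR m (fun j => g j + h j) = sumR m g + sumR m h.
Proof. induction m; [simpl; unfold sumR; simpl; lra|]. rewrite !sumR_S, IHm. lra. Qed.

Lemma sumR_minus m g h : sumR m (fun j => g j - h j) = sumR m g - sumR m h.
Proof. induction m; [unfold sumR; simpl; lra|]. rewrite !sumR_S, IHm. lra. Qed.

Lemma sumR_scal m c g : sumR m (fun j => c * g j) = c * sumR m g.
Proof. induction m; [unfold sumR; simpl; lra|]. rewrite !sumR_S, IHm. lra. Qed.

Lemma sumR_le m g h : (forall j, (j < m)%nat -> g j <= h j) -> sumR m g <= sumR m h.
Proof.
  induction m; intros H; [unfold sumR; simpl; lra|]. rewrite !sumR_S.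
  assert (sumR m g <= sumR m h) by (apply IHm; intros; apply H; lia).
  assert (g m <= h m) by (apply H; lia). lra.
Qed.

Lemma sumR_nonneg m g : (forall j, (j < m)%nat -> 0 <= g j) -> 0 <= sumR m g.
Proof. intros H. replace 0 with (sumR m (fun _ => 0)). apply sumR_le; auto.
  induction m; [reflexivity|]. rewrite sumR_S, IHm by (intros; apply H; lia). lra. Qed.

Lemma sumR_swap n p (F : nat -> nat -> R) :
  sumR n (fun i => sumR p (fun j => F i j)) = sumR p (fun j => sumR n (fun i => F i j)).
Proof.
  induction n.
  - unfold sumR at 1; simpl. symmetry. replace 0 with (sumR p (fun _ => 0)).
    apply sumR_ext; reflexivity. clear. induction p; [reflexivity|]. rewrite sumR_S, IHp; lra.
  - rewrite sumR_S, IHn, <- sumR_plus. apply sumR_ext. intros. rewrite sumR_S. reflexivity.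
Qed.

Lemma sq_le_aux X Y : X^2 <= Y^2 -> 0 <= Y -> X <= Y.
Proof. intros. nra. Qed.

Lemma CS m (a c : nat -> R) a0 c0 :
  (a0 * c0 + sumR m (fun j => a j * c j))^2 <=
  (a0^2 + sumR m (fun j => a j ^ 2)) * (c0^2 + sumR m (fun j => c j ^2)).
Proof.
  induction m.
  - unfold sumR; simpl. nra.
  - rewrite !sumR_S.
    set (P := a0 * c0 + sumR m (fun j => a j * c j)) in *.
    set (A := a0 ^ 2 + sumR m (fun j => a j ^ 2)) in *.
    set (C := c0 ^ 2 + sumR m (fun j => c j ^ 2)) in *.
    assert (HA : 0 <= A). { unfold A. assert (0 <= sumR m (fun j => a j ^ 2)) by (apply sumR_nonneg; intros; nra). nra. }
    assert (HC : 0 <= C). { unfold C. assert (0 <= sumR m (fun j => c j ^ 2)) by (apply sumR_nonneg; intros; nra). nra. }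
    assert (Hk : 2 * P * (a m * c m) <= (a m)^2 * C + (c m)^2 * A).
    { apply sq_le_aux; [| nra].
      assert ((2 * P * (a m * c m))^2 = 4 * P^2 * ((a m)^2 * (c m)^2)) by ring.
      assert (P^2 * ((a m)^2 * (c m)^2) <= A * C * ((a m)^2 * (c m)^2)) by (apply Rmult_le_compat_r; nra).
      assert (0 <= ((a m)^2 * C - (c m)^2 * A)^2) by (apply pow2_ge_0).
      assert (((a m)^2 * C + (c m)^2 * A)^2 = ((a m)^2 * C - (c m)^2 * A)^2 + 4 * A * C * ((a m)^2 * (c m)^2)) by ring.
      lra. }
    replace (a0 * c0 + (sumR m (fun j => a j * c j) + a m * c m)) with (P + a m * c m) by (unfold P; ring).
    replace (a0 ^ 2 + (sumR m (fun j => a j ^ 2) + a m ^ 2)) with (A + a m ^ 2) by (unfold A; ring).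
    replace (c0 ^ 2 + (sumR m (fun j => c j ^ 2) + c m ^ 2)) with (C + c m ^ 2) by (unfold C; ring).
    nra.
Qed.
Lemma abs_le_iff x y : Rabs x <= y <-> -y <= x <= y.
Proof. unfold Rabs; destruct Rcase_abs; split; intros; lra. Qed.

Lemma phi_ineq delta t s : 0 < delta ->
 phiH delta t + dphiH delta t * (s - t) <= phiH delta s /\
 phiH delta s <= phiH delta t + dphiH delta t * (s - t) + (s-t)^2/(2*delta).
Proof.
  intros Hd. unfold phiH, dphiH.
  destruct (Rlt_dec 1 t); destruct (Rlt_dec 1 s); try destruct (Rlt_dec (1-delta) t);
   try destruct (Rlt_dec (1-delta) s);
   split; apply (Rmult_le_reg_l (2*delta)); try lra;
   field_simplify; try lra; try nra; pose proof (pow2_ge_0 (s-t)); nra.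
Qed.


Lemma dphi_bound delta t : 0 < delta -> Rabs (dphiH delta t) <= 1.
Proof.
  intros Hd. unfold dphiH. destruct (Rlt_dec 1 t); [rewrite Rabs_R0; lra|].
  destruct (Rlt_dec (1-delta) t); [|unfold Rabs; destruct Rcase_abs; lra].
  rewrite abs_le_iff. split.
  - apply (Rmult_le_reg_l delta); [lra|]. field_simplify; lra.
  - apply (Rmult_le_reg_l delta); [lra|]. field_simplify; lra.
Qed.

Lemma phi_lip delta t s : 0 < delta -> Rabs (phiH delta s - phiH delta t) <= Rabs (s - t).
Proof.
  intros Hd. destruct (phi_ineq delta t s Hd) as [H1 _]. destruct (phi_ineq delta s t Hd) as [H2 _].
  pose proof (dphi_bound delta t Hd). pose proof (dphi_bound delta s Hd).
  assert (Rabs (dphiH delta t * (s - t)) <= Rabs (s - t)).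
  { rewrite Rabs_mult. pose proof (Rabs_pos (s-t)). nra. }
  assert (Rabs (dphiH delta s * (t - s)) <= Rabs (s - t)).
  { rewrite Rabs_mult, (Rabs_minus_sym t s). pose proof (Rabs_pos (s-t)). nra. }
  apply abs_le_iff. apply abs_le_iff in H3. apply abs_le_iff in H4. lra.
Qed.

Lemma dphi_lip delta t s : 0 < delta -> Rabs (dphiH delta s - dphiH delta t) <= Rabs (s - t) / delta.
Proof.
  intros Hd. unfold dphiH.
  destruct (Rle_dec s t) as [Hst|Hst];
  [rewrite (Rabs_left1 (s - t)) by lra | rewrite (Rabs_pos_eq (s - t)) by lra];
  rewrite abs_le_iff;
  destruct (Rlt_dec 1 t); destruct (Rlt_dec 1 s); try destruct (Rlt_dec (1-delta) t);
   try destruct (Rlt_dec (1-delta) s);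
   split; apply (Rmult_le_reg_l delta); try lra;
   field_simplify; try lra; try nra.
Qed.

Definition Nd (p : nat) (b : R) (w : nat -> R) (bz : R) (wz : nat -> R) : R :=
  (b - bz)^2 + sumR p (fun j => (w j - wz j)^2).

Lemma sumR_scal_r m c g : sumR m (fun j => g j * c) = sumR m g * c.
Proof. rewrite <- (Rmult_comm c), <- sumR_scal. apply sumR_ext; intros; ring. Qed.

Lemma margin_diff p x y i b w b' w' :
  margin p x y i b' w' - margin p x y i b w =
  y i * ((b' - b) + sumR p (fun j => x i j * (w' j - w j))).
Proof.
  unfold margin. replace (sumR p (fun j => x i j * (w' j - w j))) with
   (sumR p (fun j => x i j * w' j) - sumR p (fun j => x i j * w j)). ring.
  rewrite <- sumR_minus. apply sumR_ext; intros; ring.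
Qed.

Lemma lin_term n p x y delta b w b' w' :
  grad_b n p x y delta b w * (b' - b) + sumR p (fun j => grad_w n p x y delta b w j * (w' j - w j))
  = / INR n * sumR n (fun i => dphiH delta (margin p x y i b w) *
        (margin p x y i b' w' - margin p x y i b w)).
Proof.
  unfold grad_b, grad_w.
  set (D := fun i => dphiH delta (margin p x y i b w)).
  transitivity (/ INR n * (sumR n (fun i => y i * D i * (b' - b)) +
       sumR p (fun j => sumR n (fun i => y i * x i j * D i * (w' j - w j))))).
  - rewrite Rmult_plus_distr_l. f_equal.
    + rewrite sumR_scal_r. unfold D. ring.
    + rewrite <- sumR_scal. apply sumR_ext. intros j _. rewrite sumR_scal_r. unfold D. ring.
  - f_equal. rewrite <- sumR_swap, <- sumR_plus. apply sumR_ext. intros i _.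
    rewrite margin_diff. rewrite Rmult_plus_distr_l, Rmult_plus_distr_l.
    f_equal. fold (D i). ring.
    rewrite <- !sumR_scal. apply sumR_ext. intros. fold (D i). ring.
Qed.

Lemma INR_npos n : (0 < n)%nat -> 0 < INR n.
Proof. intros. apply lt_0_INR. lia. Qed.

Lemma f_ineq n p x y delta b w b' w' :
  (0 < n)%nat -> (forall i, (i < n)%nat -> y i = 1 \/ y i = -1) -> 0 < delta ->
  let lin := grad_b n p x y delta b w * (b' - b) + sumR p (fun j => grad_w n p x y delta b w j * (w' j - w j)) in
  fobj n p x y delta b w + lin <= fobj n p x y delta b' w' /\
  fobj n p x y delta b' w' <= fobj n p x y delta b w + lin + Lf n p x y delta / 2 * Nd p b' w' b w.
Proof.
  intros Hn Hy Hd lin. unfold lin. rewrite lin_term.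
  assert (Hni : 0 < / INR n) by (apply Rinv_0_lt_compat, INR_npos; auto).
  unfold fobj. split.
  - rewrite <- Rmult_plus_distr_l. apply Rmult_le_compat_l; [lra|].
    rewrite <- sumR_plus. apply sumR_le. intros i _.
    apply (phi_ineq delta _ _ Hd).
  - assert (HL : Lf n p x y delta / 2 * Nd p b' w' b w =
       / INR n * sumR n (fun i => y i ^ 2 * (1 + sqnorm p (x i)) * Nd p b' w' b w / (2 * delta))).
    { unfold Lf. rewrite Rinv_mult.
      replace (sumR n (fun i => y i ^ 2 * (1 + sqnorm p (x i)) * Nd p b' w' b w / (2 * delta)))
        with (sumR n (fun i => y i ^ 2 * (1 + sqnorm p (x i))) * (Nd p b' w' b w / (2 * delta))).
      assert (INR n <> 0) by (pose proof (INR_npos n Hn); lra).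
      field; split; lra.
      rewrite <- sumR_scal_r. apply sumR_ext. intros. field. lra. }
    rewrite HL, <- !Rmult_plus_distr_l. apply Rmult_le_compat_l; [lra|].
    rewrite <- !sumR_plus. apply sumR_le. intros i Hi.
    destruct (phi_ineq delta (margin p x y i b w) (margin p x y i b' w') Hd) as [_ H2].
    eapply Rle_trans; [apply H2|]. apply Rplus_le_compat_l.
    unfold Rdiv. apply Rmult_le_compat_r; [apply Rlt_le, Rinv_0_lt_compat; lra|].
    rewrite margin_diff.
    pose proof (CS p (x i) (fun j => w' j - w j) 1 (b' - b)) as HC.
    unfold Nd, sqnorm.
    replace (sumR p (fun j => (w' j - w j) ^ 2)) with (sumR p (fun j => (fun j => w' j - w j) j ^ 2)) by reflexivity.
    replace (b' - b + sumR p (fun j => x i j * (w' j - w j))) with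
      (1 * (b' - b) + sumR p (fun j => x i j * (fun j => w' j - w j) j)) by (simpl; ring).
    replace ((1:R)^2) with 1 in HC by ring.
    rewrite Rpow_mult_distr. rewrite Rmult_assoc. apply Rmult_le_compat_l; [apply pow2_ge_0|].
    exact HC.
Qed.


Lemma shrink_cases l1 c : 0 < l1 ->
  (l1 < c /\ shrink l1 c = c - l1) \/ (c < -l1 /\ shrink l1 c = c + l1) \/
  (-l1 <= c <= l1 /\ shrink l1 c = 0).
Proof.
  intros H. unfold shrink, sign, Rmax.
  destruct (Rlt_dec 0 c); [|destruct (Rlt_dec c 0)];
  (destruct (Rle_dec (Rabs c - l1) 0); unfold Rabs in *; destruct Rcase_abs);
  [ .. ]; try (right; right; split; lra); try (left; split; lra); try (right; left; split; lra).
Qed.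

Lemma prox_w l1 l2 L c wz : 0 < l1 -> 0 <= l2 -> 0 < L + l2 ->
  let wp := / (L + l2) * shrink l1 c in
  l1 * Rabs wp + l2 / 2 * wp ^ 2 + (c - L * wp) * (wz - wp) <= l1 * Rabs wz + l2 / 2 * wz ^ 2.
Proof.
  intros H1 H2 HK wp.
  assert (Hw : (L + l2) * wp = shrink l1 c) by (unfold wp; field; lra).
  assert (Hz : 0 <= (wz - wp)^2) by apply pow2_ge_0.
  destruct (shrink_cases l1 c H1) as [[Hc Hs]|[[Hc Hs]|[Hc Hs]]]; rewrite Hs in Hw.
  - assert (0 < wp) by (apply (Rmult_lt_reg_l (L + l2)); lra).
    assert (c - L * wp = l2 * wp + l1) by lra.
    rewrite (Rabs_pos_eq wp) by lra. rewrite H0.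
    assert (wz <= Rabs wz) by apply RRle_abs. nra.
  - assert (wp < 0) by (apply (Rmult_lt_reg_l (L + l2)); lra).
    assert (c - L * wp = l2 * wp - l1) by lra.
    rewrite (Rabs_left wp) by lra. rewrite H0.
    assert (- wz <= Rabs wz) by (rewrite <- Rabs_Ropp; apply RRle_abs). nra.
  - assert (wp = 0) by (apply (Rmult_eq_reg_l (L + l2)); lra).
    rewrite H. rewrite Rabs_R0.
    assert (Rabs (c * wz) <= l1 * Rabs wz).
    { rewrite Rabs_mult. apply Rmult_le_compat_r; [apply Rabs_pos|]. apply abs_le_iff. lra. }
    assert (c * wz <= Rabs (c * wz)) by apply RRle_abs.
    assert (0 <= wz ^ 2) by apply pow2_ge_0.
    nra.
Qed.

Lemma prox_b l3 L cb bz : 0 < L + l3 -> 0 <= l3 ->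
  let bp := cb / (L + l3) in
  l3 / 2 * bp ^ 2 + (cb - L * bp) * (bz - bp) <= l3 / 2 * bz ^ 2.
Proof.
  intros HK H3 bp.
  assert (cb - L * bp = l3 * bp) by (unfold bp; field; lra).
  rewrite H. assert (0 <= (bz - bp)^2) by apply pow2_ge_0. nra.
Qed.

Lemma Lf_pos n p x y delta : (0 < n)%nat -> (forall i, (i < n)%nat -> y i = 1 \/ y i = -1) ->
  0 < delta -> 0 < Lf n p x y delta.
Proof.
  intros Hn Hy Hd. unfold Lf. apply Rmult_lt_0_compat.
  - apply Rinv_0_lt_compat. apply Rmult_lt_0_compat; [apply INR_npos|]; auto.
  - destruct n as [|n']; [lia|]. rewrite sumR_S.
    assert (0 <= sumR n' (fun i => y i ^ 2 * (1 + sqnorm p (x i)))).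
    { apply sumR_nonneg. intros. assert (0 <= sqnorm p (x j)) by (apply sumR_nonneg; intros; apply pow2_ge_0).
      pose proof (pow2_ge_0 (y j)). nra. }
    assert (0 <= sqnorm p (x n')) by (apply sumR_nonneg; intros; apply pow2_ge_0).
    assert (y n' ^ 2 = 1) by (destruct (Hy n'); [lia| |]; rewrite H1; ring).
    nra.
Qed.

Lemma prox_ineq n p x y delta l1 l2 l3 b w b' w' bz wz :
  (0 < n)%nat -> (forall i, (i < n)%nat -> y i = 1 \/ y i = -1) ->
  0 < l1 -> 0 <= l2 -> 0 < l3 -> 0 < delta ->
  b' = (Lf n p x y delta * b - grad_b n p x y delta b w) / (Lf n p x y delta + l3) ->
  (forall j, (j < p)%nat -> w' j = / (Lf n p x y delta + l2) *
      shrink l1 (Lf n p x y delta * w j - grad_w n p x y delta b w j)) ->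
  Lf n p x y delta / 2 * (Nd p b' w' bz wz - Nd p b w bz wz) <=
  Fobj n p x y delta l1 l2 l3 bz wz - Fobj n p x y delta l1 l2 l3 b' w'.
Proof.
  intros Hn Hy H1 H2 H3 Hd Hb' Hw'.
  pose proof (Lf_pos n p x y delta Hn Hy Hd) as HL.
  set (L := Lf n p x y delta) in *.
  set (gb := grad_b n p x y delta b w) in *.
  set (gw := grad_w n p x y delta b w) in *.
  destruct (f_ineq n p x y delta b w bz wz Hn Hy Hd) as [Fz _].
  destruct (f_ineq n p x y delta b w b' w' Hn Hy Hd) as [_ Fp].
  fold L gb gw in Fz, Fp.
  pose proof (prox_b l3 L (L * b - gb) bz ltac:(lra) ltac:(lra)) as Pb. simpl in Pb.
  rewrite <- Hb' in Pb.
  assert (Pw : sumR p (fun j => L / 2 * ((w' j - wz j)^2 - (w j - wz j)^2)) <=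
     sumR p (fun j => gw j * (wz j - w j) - gw j * (w' j - w j) - L / 2 * (w' j - w j)^2
        + (l1 * Rabs (wz j) + l2 / 2 * wz j ^ 2) - (l1 * Rabs (w' j) + l2 / 2 * w' j ^ 2))).
  { apply sumR_le. intros j Hj.
    pose proof (prox_w l1 l2 L (L * w j - gw j) (wz j) H1 H2 ltac:(lra)) as P. simpl in P.
    rewrite <- (Hw' j Hj) in P. nra. }
  repeat (rewrite sumR_minus in Pw || rewrite sumR_plus in Pw || rewrite sumR_scal in Pw).
  unfold Fobj, Nd, norm1, sqnorm in *.
  nra.
Qed.


Definition incr (phi : nat -> nat) := forall k, (phi k < phi (S k))%nat.

Lemma incr_ge phi : incr phi -> forall k, (k <= phi k)%nat.
Proof. intros H k; induction k; [lia|]. specialize (H k); lia. Qed.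

Lemma incr_mono phi : incr phi -> forall i j, (i < j)%nat -> (phi i < phi j)%nat.
Proof.
  intros H i j Hij. induction j; [lia|].
  destruct (Nat.eq_dec i j); [subst; apply H|]. specialize (H j). specialize (IHj ltac:(lia)). lia.
Qed.

Lemma cv_sub phi a l : incr phi -> Un_cv a l -> Un_cv (fun k => a (phi k)) l.
Proof.
  intros Hp Ha eps He. destruct (Ha eps He) as [N HN]. exists N. intros k Hk.
  apply HN. pose proof (incr_ge phi Hp k). lia.
Qed.

Fixpoint build (sel : nat -> nat -> nat) (k : nat) : nat :=
  match k with
  | O => sel O O
  | S k' => sel (S (build sel k')) k
  end.

Lemma extract1 (a : nat -> R) M : (forall k, Rabs (a k) <= M) ->
  exists phi l, incr phi /\ Un_cv (fun k => a (phi k)) l.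
Proof.
  intros HM.
  destruct (Bolzano_Weierstrass a (fun c => -M <= c <= M) (compact_P3 (-M) M)) as [l Hl].
  { intros k. apply abs_le_iff. apply HM. }
  assert (H : forall N e, exists q, (N <= q)%nat /\ Rabs (a q - l) < / INR (S e)).
  { intros N e.
    assert (Hpos : 0 < / INR (S e)) by (apply Rinv_0_lt_compat, lt_0_INR; lia).
    destruct (Hl (disc l (mkposreal _ Hpos)) N) as [q [Hq1 Hq2]].
    - exists (mkposreal _ Hpos). intros z Hz. exact Hz.
    - exists q. split; auto. }
  set (sel := fun N e => proj1_sig (constructive_indefinite_description _ (H N e))).
  assert (Hsel : forall N e, (N <= sel N e)%nat /\ Rabs (a (sel N e) - l) < / INR (S e)).
  { intros. unfold sel. destruct (constructive_indefinite_description _ (H N e)); simpl; auto. }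
  exists (build sel), l. split.
  - intros k. simpl. destruct (Hsel (S (build sel k)) (S k)). lia.
  - assert (Hb : forall k, Rabs (a (build sel k) - l) < / INR (S k)).
    { intros [|k]; simpl; apply Hsel. }
    intros eps He. destruct (archimed_cor1 eps He) as [N [HN1 HN2]]. exists N.
    intros k Hk. unfold Rdist. eapply Rlt_le_trans; [apply Hb|].
    eapply Rle_trans; [|apply Rlt_le, HN1].
    apply Rinv_le_contravar. apply lt_0_INR; lia. apply le_INR; lia.
Qed.

Lemma extract (a : nat -> nat -> R) M m :
  (forall k c, (c < m)%nat -> Rabs (a k c) <= M) ->
  exists phi lim, incr phi /\ forall c, (c < m)%nat -> Un_cv (fun k => a (phi k) c) (lim c).
Proof.
  induction m; intros HM.
  - exists (fun k => k), (fun _ => 0). split; [intros k; lia| intros; lia].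
  - destruct IHm as [phi [lim [Hp Hc]]]. { intros; apply HM; lia. }
    destruct (extract1 (fun k => a (phi k) m) M) as [psi [l [Hq Hl]]]. { intros; apply HM; lia. }
    exists (fun k => phi (psi k)), (fun c => if Nat.eqb c m then l else lim c). split.
    + intros k. apply incr_mono; auto.
    + intros c Hcm. destruct (Nat.eqb_spec c m).
      * subst. exact Hl.
      * apply (cv_sub psi (fun k => a (phi k) c)); auto. apply Hc; lia.
Qed.

Lemma cv_const c : Un_cv (fun _ => c) c.
Proof. intros e He. exists O. intros. unfold Rdist. rewrite Rminus_diag, Rabs_R0. lra. Qed.

Lemma cv_lip (g : R -> R) K a l : 0 <= K -> (forall s t, Rabs (g s - g t) <= K * Rabs (s - t)) ->
  Un_cv a l -> Un_cv (fun k => g (a k)) (g l).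
Proof.
  intros HK Hg Ha e He. destruct (Ha (e / (K + 1))) as [N HN].
  { apply Rdiv_lt_0_compat; lra. }
  exists N. intros k Hk. specialize (HN k Hk). unfold Rdist in *.
  eapply Rle_lt_trans; [apply Hg|].
  apply (Rle_lt_trans _ ((K+1) * Rabs (a k - l))).
  { pose proof (Rabs_pos (a k - l)). nra. }
  apply (Rmult_lt_reg_l (/ (K+1))). apply Rinv_0_lt_compat; lra.
  replace (/ (K + 1) * ((K + 1) * Rabs (a k - l))) with (Rabs (a k - l)) by (field; lra).
  replace (/ (K + 1) * e) with (e / (K+1)) by (field; lra). exact HN.
Qed.

Lemma cv_ext a b l : (forall k, a k = b k) -> Un_cv a l -> Un_cv b l.
Proof. intros H Ha e He. destruct (Ha e He) as [N HN]. exists N. intros. rewrite <- H. auto. Qed.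

Lemma cv_sumR m (A : nat -> nat -> R) l :
  (forall j, (j < m)%nat -> Un_cv (fun k => A k j) (l j)) ->
  Un_cv (fun k => sumR m (A k)) (sumR m l).
Proof.
  induction m; intros H.
  - apply (cv_ext (fun _ => 0)); [reflexivity|apply cv_const].
  - rewrite sumR_S. apply (cv_ext (fun k => sumR m (A k) + A k m)).
    { intros; rewrite sumR_S; reflexivity. }
    apply CV_plus; [apply IHm; intros; apply H; lia | apply H; lia].
Qed.


Lemma cv_sq a l : Un_cv a l -> Un_cv (fun k => a k ^ 2) (l ^ 2).
Proof.
  intros H. apply (cv_ext (fun k => a k * a k)); [intros; ring|].
  replace (l^2) with (l * l) by ring. apply CV_mult; auto.
Qed.

Lemma cv_scal c a l : Un_cv a l -> Un_cv (fun k => c * a k) (c * l).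
Proof. intros. apply (CV_mult (fun _ => c)); auto. apply cv_const. Qed.

Lemma margin_cv p x y i bq wq b0 w0 :
  Un_cv bq b0 -> (forall j, (j < p)%nat -> Un_cv (fun k => wq k j) (w0 j)) ->
  Un_cv (fun k => margin p x y i (bq k) (wq k)) (margin p x y i b0 w0).
Proof.
  intros Hb Hw. unfold margin. apply cv_scal. apply CV_plus; auto.
  apply (cv_sumR p (fun k j => x i j * wq k j) (fun j => x i j * w0 j)).
  intros. apply cv_scal. auto.
Qed.

Lemma Fobj_cv n p x y delta l1 l2 l3 bq wq b0 w0 : 0 < delta ->
  Un_cv bq b0 -> (forall j, (j < p)%nat -> Un_cv (fun k => wq k j) (w0 j)) ->
  Un_cv (fun k => Fobj n p x y delta l1 l2 l3 (bq k) (wq k)) (Fobj n p x y delta l1 l2 l3 b0 w0).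
Proof.
  intros Hd Hb Hw. unfold Fobj, fobj, norm1, sqnorm.
  repeat apply CV_plus; try apply cv_scal.
  - apply (cv_sumR n (fun k i => phiH delta (margin p x y i (bq k) (wq k)))).
    intros i _. apply (cv_lip (phiH delta) 1); [lra| |apply margin_cv; auto].
    intros. rewrite Rmult_1_l. apply phi_lip; auto.
  - apply (cv_sumR p (fun k j => Rabs (wq k j))). intros j Hj.
    apply (cv_lip Rabs 1); [lra| |auto]. intros. rewrite Rmult_1_l. apply Rabs_triang_inv2.
  - apply (cv_sumR p (fun k j => wq k j ^ 2)). intros j Hj. apply cv_sq; auto.
  - apply cv_sq; auto.
Qed.

Lemma gradw_cv n p x y delta bq wq b0 w0 j : 0 < delta ->
  Un_cv bq b0 -> (forall j, (j < p)%nat -> Un_cv (fun k => wq k j) (w0 j)) ->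
  Un_cv (fun k => grad_w n p x y delta (bq k) (wq k) j) (grad_w n p x y delta b0 w0 j).
Proof.
  intros Hd Hb Hw. unfold grad_w. apply cv_scal.
  apply (cv_sumR n (fun k i => y i * x i j * dphiH delta (margin p x y i (bq k) (wq k)))).
  intros i _. apply cv_scal.
  apply (cv_lip (dphiH delta) (/ delta)); [apply Rlt_le, Rinv_0_lt_compat; lra| |apply margin_cv; auto].
  intros. rewrite Rmult_comm. apply dphi_lip; auto.
Qed.

Lemma Nd_cv p bq wq b0 w0 bz wz :
  Un_cv bq b0 -> (forall j, (j < p)%nat -> Un_cv (fun k => wq k j) (w0 j)) ->
  Un_cv (fun k => Nd p (bq k) (wq k) bz wz) (Nd p b0 w0 bz wz).
Proof.
  intros Hb Hw. unfold Nd. apply CV_plus.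
  - apply cv_sq. apply CV_minus; auto. apply cv_const.
  - apply (cv_sumR p (fun k j => (wq k j - wz j) ^ 2)). intros j Hj.
    apply cv_sq. apply CV_minus; auto. apply cv_const.
Qed.


Lemma sumR_zero m : sumR m (fun _ => 0) = 0.
Proof. induction m; [reflexivity|]. rewrite sumR_S, IHm; lra. Qed.

Lemma sumR_ge_term m g j : (forall i, (i < m)%nat -> 0 <= g i) -> (j < m)%nat -> g j <= sumR m g.
Proof.
  induction m; intros H Hj; [lia|]. rewrite sumR_S.
  assert (0 <= sumR m g) by (apply sumR_nonneg; intros; apply H; lia).
  destruct (Nat.eq_dec j m).
  - subst. lra.
  - assert (g j <= sumR m g) by (apply IHm; [intros; apply H; lia|lia]).
    assert (0 <= g m) by (apply H; lia). lra.
Qed.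

Lemma Nd_nonneg p b w bz wz : 0 <= Nd p b w bz wz.
Proof.
  unfold Nd. pose proof (pow2_ge_0 (b - bz)).
  assert (0 <= sumR p (fun j => (w j - wz j)^2)) by (apply sumR_nonneg; intros; apply pow2_ge_0). lra.
Qed.

Lemma Nd_b p b w bz wz : (b - bz)^2 <= Nd p b w bz wz.
Proof.
  unfold Nd. assert (0 <= sumR p (fun j => (w j - wz j)^2)) by (apply sumR_nonneg; intros; apply pow2_ge_0). lra.
Qed.

Lemma Nd_w p b w bz wz j : (j < p)%nat -> (w j - wz j)^2 <= Nd p b w bz wz.
Proof.
  intros Hj. unfold Nd. pose proof (pow2_ge_0 (b - bz)).
  assert ((w j - wz j)^2 <= sumR p (fun j => (w j - wz j)^2)).
  { apply (sumR_ge_term p (fun j => (w j - wz j)^2)); auto. intros; apply pow2_ge_0. }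
  lra.
Qed.

Lemma Nd_self p b w : Nd p b w b w = 0.
Proof.
  unfold Nd. rewrite (sumR_ext p _ (fun _ => 0)), sumR_zero by (intros; ring). ring.
Qed.

Lemma sq_small t X : t^2 <= X -> Rabs t <= 1 + X.
Proof.
  intros H. destruct (Rle_dec (Rabs t) (1 + X)); auto.
  exfalso. assert (Rabs t ^ 2 = t ^ 2) by (unfold Rabs; destruct Rcase_abs; ring).
  pose proof (pow2_ge_0 t). nra.
Qed.

Lemma squeeze a c l : (forall k, l <= a k <= l + c k) -> Un_cv c 0 -> Un_cv a l.
Proof.
  intros H Hc e He. destruct (Hc e He) as [N HN]. exists N. intros k Hk.
  specialize (HN k Hk). specialize (H k). unfold Rdist in *.
  rewrite Rminus_0_r in HN. revert HN; unfold Rabs; repeat destruct Rcase_abs; lra.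
Qed.

Lemma sq_cv t l D : (forall k, (t k - l)^2 <= D k) -> Un_cv D 0 -> Un_cv t l.
Proof.
  intros H HD e He. destruct (HD (e^2)) as [N HN]. { apply pow_lt; lra. }
  exists N. intros k Hk. specialize (HN k Hk). specialize (H k). unfold Rdist in *.
  rewrite Rminus_0_r in HN. pose proof (RRle_abs (D k)).
  assert ((t k - l)^2 < e^2) by lra.
  assert (Rabs (t k - l) ^ 2 = (t k - l)^2) by (unfold Rabs; destruct Rcase_abs; ring).
  pose proof (Rabs_pos (t k - l)). nra.
Qed.

Lemma decr_le0 D : (forall k, D (S k) <= D k) -> forall k, D k <= D O.
Proof. intros H k; induction k; [lra|]. specialize (H k); lra. Qed.

Lemma eventually_all p (P : nat -> nat -> Prop) :
  (forall j, (j < p)%nat -> exists N, forall k, (N <= k)%nat -> P j k) ->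
  exists N, forall k, (N <= k)%nat -> forall j, (j < p)%nat -> P j k.
Proof.
  induction p; intros H.
  - exists O. intros; lia.
  - destruct IHp as [N1 H1]. { intros; apply H; lia. }
    destruct (H p ltac:(lia)) as [N2 H2]. exists (Nat.max N1 N2). intros k Hk j Hj.
    destruct (Nat.eq_dec j p). { subst. apply H2. lia. } apply H1; lia.
Qed.

Lemma sign_pos t : 0 < t -> sign t = 1.
Proof. intros; unfold sign; destruct (Rlt_dec 0 t); [reflexivity|lra]. Qed.
Lemma sign_neg t : t < 0 -> sign t = -1.
Proof. intros; unfold sign; destruct (Rlt_dec 0 t); [lra|]. destruct (Rlt_dec t 0); [reflexivity|lra]. Qed.


Theorem lemma1
  (n p : nat) (x : nat -> nat -> R) (y : nat -> R)
  (l1 l2 l3 delta : R)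
  (Hn : (0 < n)%nat)
  (Hy : forall i, (i < n)%nat -> y i = 1 \/ y i = -1)
  (Hl1 : 0 < l1) (Hl2 : 0 <= l2) (Hl3 : 0 < l3) (Hdelta : 0 < delta)
  (bs : R) (ws : nat -> R)
  (Hmin : forall b w, Fobj n p x y delta l1 l2 l3 bs ws <= Fobj n p x y delta l1 l2 l3 b w)
  (Huniq : forall b w,
      (forall b' w', Fobj n p x y delta l1 l2 l3 b w <= Fobj n p x y delta l1 l2 l3 b' w') ->
      b = bs /\ (forall j, (j < p)%nat -> w j = ws j))
  (bk : nat -> R) (wk : nat -> nat -> R)
  (Hb : forall k, (1 <= k)%nat ->
      bk k = (Lf n p x y delta * bk (k - 1)%nat
              - grad_b n p x y delta (bk (k - 1)%nat) (wk (k - 1)%nat))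
             / (Lf n p x y delta + l3))
  (Hw : forall k j, (1 <= k)%nat -> (j < p)%nat ->
      wk k j = / (Lf n p x y delta + l2) *
               shrink l1 (Lf n p x y delta * wk (k - 1)%nat j
                          - grad_w n p x y delta (bk (k - 1)%nat) (wk (k - 1)%nat) j)) :
  (forall j, (j < p)%nat -> ws j <> 0 ->
      Rabs (gradQ_w n p x y delta l2 bs ws j) = l1) /\
  (forall j, (j < p)%nat -> Rabs (gradQ_w n p x y delta l2 bs ws j) < l1 -> ws j = 0) /\
  (exists K : nat, forall k, (K <= k)%nat ->
      (forall j, (j < p)%nat -> Rabs (gradQ_w n p x y delta l2 bs ws j) < l1 ->
          wk k j = 0) /\
      (forall j, (j < p)%nat -> Rabs (gradQ_w n p x y delta l2 bs ws j) = l1 ->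
          sign (hfun n p x y delta l2 (bk k) (wk k) j)
          = sign (hfun n p x y delta l2 bs ws j))).
Proof.
  pose proof (Lf_pos n p x y delta Hn Hy Hdelta) as HL.
  set (L := Lf n p x y delta) in *.
  set (F := Fobj n p x y delta l1 l2 l3) in *.
  set (cst := fun j => L * ws j - grad_w n p x y delta bs ws j).
  assert (HF : forall j, (j < p)%nat -> ws j = / (L + l2) * shrink l1 (cst j)).
  { set (w' := fun j => / (L + l2) * shrink l1 (cst j)).
    pose proof (prox_ineq n p x y delta l1 l2 l3 bs ws
       ((L * bs - grad_b n p x y delta bs ws) / (L + l3)) w' bs ws Hn Hy Hl1 Hl2 Hl3 Hdelta
       eq_refl (fun j _ => eq_refl)) as P.
    fold L F in P. rewrite Nd_self in P.
    pose proof (Hmin ((L * bs - grad_b n p x y delta bs ws) / (L + l3)) w') as Hm. fold F in Hm.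
    intros j Hj.
    pose proof (Nd_w p ((L * bs - grad_b n p x y delta bs ws) / (L + l3)) w' bs ws j Hj).
    assert ((w' j - ws j)^2 <= 0) by nra.
    pose proof (pow2_ge_0 (w' j - ws j)).
    assert (w' j - ws j = 0) by (apply (pow_eq_zero_lt 2 (w' j - ws j)) || nra).
    unfold w' in *. lra. }
  assert (HQ : forall j, gradQ_w n p x y delta l2 bs ws j = (L + l2) * ws j - cst j).
  { intros. unfold gradQ_w, cst. ring. }
  assert (C1 : forall j, (j < p)%nat -> ws j <> 0 ->
      Rabs (gradQ_w n p x y delta l2 bs ws j) = l1).
  { intros j Hj Hne. rewrite HQ. specialize (HF j Hj).
    assert (Hk : (L + l2) * ws j = shrink l1 (cst j)) by (rewrite HF; field; lra).
    destruct (shrink_cases l1 (cst j) Hl1) as [[Hc Hs]|[[Hc Hs]|[Hc Hs]]]; rewrite Hs in Hk.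
    - rewrite Hk. replace (cst j - l1 - cst j) with (- l1) by ring. rewrite Rabs_Ropp, Rabs_pos_eq; lra.
    - rewrite Hk. replace (cst j + l1 - cst j) with l1 by ring. rewrite Rabs_pos_eq; lra.
    - exfalso. apply Hne. apply (Rmult_eq_reg_l (L + l2)); lra. }
  assert (C2 : forall j, (j < p)%nat -> Rabs (gradQ_w n p x y delta l2 bs ws j) < l1 -> ws j = 0).
  { intros j Hj Hlt. destruct (Req_dec (ws j) 0); auto. rewrite C1 in Hlt; auto; lra. }
  split; [exact C1|]. split; [exact C2|].
  assert (Hit : forall k, bk (S k) = (L * bk k - grad_b n p x y delta (bk k) (wk k)) / (L + l3) /\
     forall j, (j < p)%nat -> wk (S k) j = / (L + l2) * shrink l1 (L * wk k j - grad_w n p x y delta (bk k) (wk k) j)).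
  { intros k. split.
    - rewrite Hb by lia. replace (S k - 1)%nat with k by lia. reflexivity.
    - intros j Hj. rewrite Hw by lia. replace (S k - 1)%nat with k by lia. reflexivity. }
  set (D := fun k => Nd p (bk k) (wk k) bs ws).
  assert (HP : forall k, L / 2 * (D (S k) - D k) <= F bs ws - F (bk (S k)) (wk (S k))).
  { intros k. destruct (Hit k) as [H1 H2].
    apply (prox_ineq n p x y delta l1 l2 l3 (bk k) (wk k) (bk (S k)) (wk (S k)) bs ws); auto. }
  assert (Hdec : forall k, D (S k) <= D k).
  { intros k. specialize (HP k). pose proof (Hmin (bk (S k)) (wk (S k))). fold F in H. nra. }
  assert (HD0 : forall k, 0 <= D k) by (intros; apply Nd_nonneg).
  destruct (decreasing_cv D Hdec) as [r Hr].
  { exists 0. intros z [k Hk]. subst z. unfold opp_seq. specialize (HD0 k). lra. }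
  assert (HFcv : Un_cv (fun k => F (bk k) (wk k)) (F bs ws)).
  { apply (CV_shift _ 1). apply (cv_ext (fun k => F (bk (S k)) (wk (S k)))).
    { intros k. rewrite Nat.add_1_r. reflexivity. }
    apply (squeeze _ (fun k => L / 2 * (D k - D (S k)))).
    - intros k. specialize (HP k). pose proof (Hmin (bk (S k)) (wk (S k))). fold F in H. split; lra.
    - replace 0 with (L / 2 * (r - r)) by ring. apply cv_scal. apply CV_minus; auto.
      apply (cv_ext (fun k => D (k + 1)%nat)). { intros; rewrite Nat.add_1_r; reflexivity. }
      apply CV_shift'. auto. }
  set (M := Rabs bs + sumR p (fun j => Rabs (ws j)) + 1 + D O).
  set (a := fun k c => match c with O => bk k | S j => wk k j end).
  assert (Hsw : 0 <= sumR p (fun j => Rabs (ws j))) by (apply sumR_nonneg; intros; apply Rabs_pos).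
  destruct (extract a M (S p)) as [phi [lim [Hphi Hlim]]].
  { intros k c Hc. pose proof (decr_le0 D Hdec k) as Hk. destruct c as [|j]; simpl.
    - pose proof (sq_small _ _ (Rle_trans _ _ _ (Nd_b p (bk k) (wk k) bs ws) Hk)).
      pose proof (Rabs_triang (bk k - bs) bs). replace (bk k - bs + bs) with (bk k) in H0 by ring.
      unfold M. lra.
    - pose proof (sq_small _ _ (Rle_trans _ _ _ (Nd_w p (bk k) (wk k) bs ws j ltac:(lia)) Hk)).
      pose proof (Rabs_triang (wk k j - ws j) (ws j)). replace (wk k j - ws j + ws j) with (wk k j) in H0 by ring.
      pose proof (sumR_ge_term p (fun j => Rabs (ws j)) j ltac:(intros; apply Rabs_pos) ltac:(lia)).
      pose proof (Rabs_pos bs). unfold M. simpl in H1. lra. }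
  set (b0 := lim O). set (w0 := fun j => lim (S j)).
  assert (Hb0 : Un_cv (fun k => bk (phi k)) b0) by (apply (Hlim O); lia).
  assert (Hw0 : forall j, (j < p)%nat -> Un_cv (fun k => wk (phi k) j) (w0 j)).
  { intros j Hj. apply (Hlim (S j)); lia. }
  assert (HF0 : F b0 w0 = F bs ws).
  { apply (UL_sequence (fun k => F (bk (phi k)) (wk (phi k)))).
    - apply Fobj_cv; auto.
    - apply (cv_sub phi (fun k => F (bk k) (wk k))); auto. }
  destruct (Huniq b0 w0) as [Eb Ew].
  { intros. fold F. rewrite HF0. apply Hmin. }
  assert (r = 0).
  { apply (UL_sequence (fun k => D (phi k))).
    - apply (cv_sub phi D); auto.
    - replace 0 with (Nd p b0 w0 bs ws). apply Nd_cv; auto.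
      rewrite Eb. rewrite <- (Nd_self p bs ws). unfold Nd. f_equal. apply sumR_ext. intros. rewrite Ew; auto. }
  subst r.
  assert (Hbk : Un_cv bk bs).
  { apply (sq_cv _ _ D); auto. intros. apply Nd_b. }
  assert (Hwk : forall j, (j < p)%nat -> Un_cv (fun k => wk k j) (ws j)).
  { intros j Hj. apply (sq_cv _ _ D); auto. intros. apply Nd_w; auto. }
  assert (Hc : forall j, (j < p)%nat ->
     Un_cv (fun k => L * wk k j - grad_w n p x y delta (bk k) (wk k) j) (cst j)).
  { intros j Hj. apply CV_minus. apply cv_scal; auto. apply gradw_cv; auto. }
  assert (Hh : forall b w j, hfun n p x y delta l2 b w j = / (L + l2) * (L * w j - grad_w n p x y delta b w j)).
  { intros. unfold hfun, gradQ_w. fold L. field. lra. }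
  destruct (eventually_all p (fun j k =>
     (Rabs (gradQ_w n p x y delta l2 bs ws j) < l1 -> wk k j = 0) /\
     (Rabs (gradQ_w n p x y delta l2 bs ws j) = l1 ->
          sign (hfun n p x y delta l2 (bk k) (wk k) j) = sign (hfun n p x y delta l2 bs ws j))))
    as [NN HNN].
  2: { exists NN. intros k Hk. split; intros j Hj; apply (HNN k Hk j Hj). }
  intros j Hj.
  destruct (Rlt_dec (Rabs (gradQ_w n p x y delta l2 bs ws j)) l1) as [Hlt|Hnlt].
  - assert (Hcs : Rabs (cst j) < l1).
    { pose proof (C2 j Hj Hlt) as Hz. rewrite HQ, Hz in Hlt. rewrite Rmult_0_r, Rminus_0_l, Rabs_Ropp in Hlt. exact Hlt. }
    destruct (Hc j Hj (l1 - Rabs (cst j))) as [N HN]; [lra|].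
    exists (S N). intros k Hk. split; [|intros; lra].
    intros _. destruct k as [|k]; [lia|]. destruct (Hit k) as [_ H2]. rewrite H2 by auto.
    specialize (HN k ltac:(lia)). unfold Rdist in HN.
    pose proof (Rabs_triang_inv (L * wk k j - grad_w n p x y delta (bk k) (wk k) j) (cst j)).
    destruct (shrink_cases l1 (L * wk k j - grad_w n p x y delta (bk k) (wk k) j) Hl1) as [[H3 H4]|[[H3 H4]|[H3 H4]]].
    + exfalso. rewrite Rabs_pos_eq in H by lra. lra.
    + exfalso. rewrite Rabs_left in H by lra. lra.
    + rewrite H4. ring.
  - destruct (Req_dec (Rabs (gradQ_w n p x y delta l2 bs ws j)) l1) as [Heq|Hne];
      [| exists O; intros; split; intros; lra].
    assert (Hcs : cst j <> 0).
    { destruct (Req_dec (ws j) 0) as [Hz|Hz].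
      - rewrite HQ, Hz, Rmult_0_r, Rminus_0_l, Rabs_Ropp in Heq. intro E. rewrite E, Rabs_R0 in Heq. lra.
      - specialize (HF j Hj).
        assert (Hk : (L + l2) * ws j = shrink l1 (cst j)) by (rewrite HF; field; lra).
        destruct (shrink_cases l1 (cst j) Hl1) as [[H3 H4]|[[H3 H4]|[H3 H4]]]; try lra.
        rewrite H4 in Hk. exfalso. apply Hz. apply (Rmult_eq_reg_l (L + l2)); lra. }
    destruct (Hc j Hj (Rabs (cst j))) as [N HN]. { apply Rabs_pos_lt; auto. }
    exists N. intros k Hk. split; [intros; lra|]. intros _.
    specialize (HN k Hk). unfold Rdist in HN. rewrite !Hh. fold (cst j).
    assert (HK : 0 < / (L + l2)) by (apply Rinv_0_lt_compat; lra).
    destruct (Rlt_dec 0 (cst j)).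
    + rewrite (Rabs_pos_eq (cst j)) in HN by lra.
      assert (0 < L * wk k j - grad_w n p x y delta (bk k) (wk k) j)
        by (revert HN; unfold Rabs; destruct Rcase_abs; lra).
      rewrite !sign_pos; auto; apply Rmult_lt_0_compat; auto.
    + rewrite (Rabs_left (cst j)) in HN by lra.
      assert (L * wk k j - grad_w n p x y delta (bk k) (wk k) j < 0)
        by (revert HN; unfold Rabs; destruct Rcase_abs; lra).
      assert (cst j < 0) by lra.
      rewrite !sign_neg; auto; nra.
Qed.
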